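(* Let $\{a_n\}_{n=1}^\infty$ be a sequence of real numbers with $\limsup_{n\to\infty} a_n = \infty$. Then for infinitely many $k \in \mathbb{N}$, $$a_{k+1} > \left(1 + \frac{1}{k^2}\right)\max_{1 \le n \le k} a_n.$$ *)

(* Defs.v *)
From Stdlib Require Import Reals.
Open Scope R_scope.

(* Sequences a_1, a_2, ... are modelled as a : nat -> R; the value a 0 is
   never used.  prefix_max a k = max_{1 <= n <= k} a n  (for k >= 1). *)
Fixpoint prefix_max (a : nat -> R) (k : nat) : R :=
  match k with
  | O => a 1%nat            (* junk value, never used for k = 0 *)
  | S O => a 1%nat
  | S k' => Rmax (prefix_max a k') (a k)
  end.

Definition limsup_infty (a : nat -> R) : Prop :=
  forall (M : R) (N : nat), exists n : nat, (N <= n)%nat /\ M < a n.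

(* Main.v *)
Require Import Defs.
From Stdlib Require Import Reals Lra Lia Psatz Classical.
Open Scope R_scope.

Lemma pm_S (a : nat -> R) (k : nat) : (1 <= k)%nat ->
  prefix_max a (S k) = Rmax (prefix_max a k) (a (S k)).
Proof. intros Hk. destruct k as [|k]; [lia|]. reflexivity. Qed.

Lemma pm_ge (a : nat -> R) (n : nat) : (1 <= n)%nat -> a n <= prefix_max a n.
Proof.
  intros Hn. destruct n as [|n]; [lia|]. destruct n as [|n]; simpl; [lra|].
  apply Rmax_r.
Qed.

Lemma step_ineq (x M C b : R) : 2 <= x -> 0 <= C -> M * x <= C * (x - 1) ->
  b <= (1 + 1 / x ^ 2) * M -> Rmax M b * (x + 1) <= C * x.
Proof.
  intros Hx HC HM Hb.
  assert (Hx2 : 0 < x ^ 2) by nra.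
  assert (E : (1 + 1 / x ^ 2) * M = (x^2 + 1) * M / x^2) by (field; lra).
  rewrite E in Hb.
  assert (Hb' : b * x^2 <= (x^2+1) * M).
  { apply (Rmult_le_compat_r (x^2)) in Hb; [|lra].
    replace ((x ^ 2 + 1) * M / x ^ 2 * x ^ 2) with ((x^2+1)*M) in Hb by (field; lra).
    exact Hb. }
  unfold Rmax; destruct (Rle_dec M b).
  - destruct (Rle_dec M 0).
    + assert (b * x^2 <= 0) by nra. assert (b <= 0) by nra. nra.
    +
      assert (H1 : b * x^2 * (x+1) * x <= (x^2+1) * M * x * (x+1)).
      { replace (b * x^2 * (x+1) * x) with ((b * x^2) * ((x+1) * x)) by ring.
        replace ((x^2+1) * M * x * (x+1)) with (((x^2+1) * M) * ((x+1) * x)) by ring.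
        apply Rmult_le_compat_r; [nra|exact Hb']. }
      assert (H2 : (x^2+1) * M * x * (x+1) <= (x^2+1) * C * (x-1) * (x+1)).
      { replace ((x^2+1) * M * x * (x+1)) with ((M * x) * ((x^2+1) * (x+1))) by ring.
        replace ((x^2+1) * C * (x-1) * (x+1)) with ((C * (x-1)) * ((x^2+1) * (x+1))) by ring.
        apply Rmult_le_compat_r; [nra|exact HM]. }
      assert (H4 : (x^2+1) * C * (x-1) * (x+1) <= C * x * x^3).
      { replace ((x^2+1) * C * (x-1) * (x+1)) with (C * x * x^3 - C) by ring. lra. }
      assert (H3 : (b * (x+1)) * x^3 <= (C * x) * x^3).
      { replace ((b * (x+1)) * x^3) with (b * x^2 * (x+1) * x) by ring. lra. }
      assert (0 < x^3) by nra.
      apply (Rmult_le_reg_r (x^3)); lra.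
  - nra.
Qed.

Theorem lemma2p7 (a : nat -> R) (H : limsup_infty a) :
  forall N : nat, exists k : nat, (N <= k)%nat /\ (1 <= k)%nat /\
    a (S k) > (1 + 1 / (INR k ^ 2)) * prefix_max a k.
Proof.
  intros N. apply NNPP. intros Hno.
  assert (Hle : forall k, (N <= k)%nat -> (1 <= k)%nat ->
            a (S k) <= (1 + 1 / (INR k ^ 2)) * prefix_max a k).
  { intros k H1 H2. apply Rnot_gt_le. intros Hg. apply Hno. exists k; auto. }
  set (m := Nat.max N 2).
  set (P := Rmax (prefix_max a m) 0).
  set (C := P * INR m / (INR m - 1)).
  assert (Hm2 : 2 <= INR m).
  { replace 2 with (INR 2) by (simpl; lra). apply le_INR. unfold m; lia. }
  assert (HP0 : 0 <= P) by (unfold P; apply Rmax_r).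
  assert (HC0 : 0 <= C).
  { unfold C. apply Rmult_le_pos; [nra|]. apply Rlt_le, Rinv_0_lt_compat; lra. }
  assert (Inv : forall j, prefix_max a (m + j) * INR (m + j) <= C * (INR (m + j) - 1)).
  { induction j as [|j IH].
    - rewrite Nat.add_0_r. unfold C.
      replace (P * INR m / (INR m - 1) * (INR m - 1)) with (P * INR m) by (field; lra).
      apply Rmult_le_compat_r; [lra|]. apply Rmax_l.
    - replace (m + S j)%nat with (S (m + j)) by lia.
      rewrite pm_S by (unfold m; lia). rewrite S_INR.
      replace (INR (m + j) + 1 - 1) with (INR (m + j)) by ring.
      apply step_ineq; auto.
      + replace 2 with (INR 2) by (simpl; lra). apply le_INR. unfold m; lia.
      + apply Hle; unfold m; lia. }
  destruct (H C m) as [n [Hn HCn]].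
  specialize (Inv (n - m)%nat). replace (m + (n - m))%nat with n in Inv by lia.
  assert (Hn2 : 2 <= INR n).
  { replace 2 with (INR 2) by (simpl; lra). apply le_INR. unfold m in Hn; lia. }
  assert (Han : a n <= prefix_max a n) by (apply pm_ge; unfold m in Hn; lia).
  nra.
Qed.
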